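(* Let $d\ge2$. Every $\sigma_d$-rotational set $A\subset\mathbb{T}$ is a union of at most $d-1$ distinct $\sigma_d$-orbits.
   Context: $\mathbb{T}=\mathbb{R}/\mathbb{Z}$, ordered by representatives in $[0,1)$; $\sigma_d(t)=dt$. A finite set $A=\{t_0<\dots<t_{N-1}\}\subset\mathbb{T}$ (indices in $\mathbb{Z}/N\mathbb{Z}$) is $\sigma_d$-rotational if for some fixed $0\ne P\in\mathbb{Z}/N\mathbb{Z}$, $\sigma_d(t_i)=t_{i+P}$ for all $i$. *)

(* Defs.v *)
From HB Require Import structures.
From mathcomp Require Import all_boot all_order all_algebra.
From mathcomp Require Import reals.
Set Implicit Arguments. Unset Strict Implicit. Unset Printing Implicit Defensive.
Import Order.TTheory GRing.Theory Num.Theory.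
Local Open Scope ring_scope.

(* The circle T = R/Z is represented by the representatives in [0,1). *)
Definition frac {R : realType} (x : R) : R := x - (Num.floor x)%:~R.

Definition sigma {R : realType} (d : nat) (t : R) : R := frac (d%:R * t).

(* A finite subset A of T, given as its increasing enumeration
   s = [t_0 < ... < t_{N-1}] of representatives in [0,1). *)
Definition circle_enum {R : realType} (s : seq R) : Prop :=
  sorted <%R s /\ all (fun t => (0 <= t) && (t < 1)) s.

Definition rotational {R : realType} (d : nat) (s : seq R) : Prop :=
  exists P : nat, (P %% size s != 0)%N /\
    forall i : nat, (i < size s)%N ->
      sigma d (nth 0 s i) = nth 0 s ((i + P) %% size s).

Definition in_sigma_orbit {R : realType} (d : nat) (x y : R) : Prop :=
  exists n : nat, y = iter n (sigma d) x.

(* Main.v *)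
Require Import Defs.
From HB Require Import structures.
From mathcomp Require Import all_boot all_order all_algebra.
From mathcomp Require Import reals.
From mathcomp Require Import ring lra zify.
Import Order.TTheory GRing.Theory Num.Theory.
Local Open Scope ring_scope.

Lemma cyc_sum (R : realType) (h : nat -> R) (N : nat) :
  h N = h 0%N -> \sum_(0 <= m < N) h m.+1 = \sum_(0 <= m < N) h m.
Proof.
case: N => [|n] hN; first by rewrite !big_geq.
by rewrite big_nat_recr //= big_nat_recl //= hN addrC.
Qed.

Lemma shift_sum {R : realType} (f : nat -> R) (N Q : nat) : (0 < N)%N ->
  \sum_(0 <= i < N) f ((i + Q) %% N)%N = \sum_(0 <= i < N) f i.
Proof.
move=> N0; elim: Q => [|Q IH].
  by apply: eq_big_nat => i /andP[_ iN]; rewrite addn0 modn_small.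
rewrite -IH.
have := @cyc_sum R (fun i => f ((i + Q) %% N)%N) N.
rewrite /= modnDl add0n => <- //.
by apply: eq_big_nat => i _; rewrite addnS -addSn.
Qed.

Lemma modmul_small (N a n P : nat) : (0 < N)%N ->
  ((a + (n %% N) * P) %% N = (a + n * P) %% N)%N.
Proof.
move=> N0.
rewrite [in RHS](divn_eq n N) mulnDl mulnAC addnCA modnMDl //.
Qed.

Lemma sum_filter_le (R : realType) (r : seq nat) (Q : pred nat) (F : nat -> R) :
  (forall i, i \in r -> 0 <= F i) ->
  \sum_(i <- r | Q i) F i <= \sum_(i <- r) F i.
Proof.
elim: r => [|x r IH] H; first by rewrite !big_nil.
rewrite !big_cons.
have Hr : forall i, i \in r -> 0 <= F i by move=> i ir; apply: H; rewrite inE ir orbT.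
have Hx : 0 <= F x by apply: H; rewrite inE eqxx.
case: (Q x).
  by rewrite lerD2l; apply: IH.
by rewrite -[X in X <= _]add0r; apply: lerD => //; apply: IH.
Qed.

Theorem corollary3p5 (R : realType) (d : nat) (s : seq R) :
  (2 <= d)%N -> circle_enum s -> rotational d s ->
  exists xs : seq R,
    (size xs <= d - 1)%N /\
    (forall y : R, y \in s <-> exists2 x : R, (x \in xs) & (in_sigma_orbit d x y)) /\
    (forall i j : nat, (i < size xs)%N -> (j < size xs)%N -> i <> j ->
       ~ in_sigma_orbit d (nth 0 xs i) (nth 0 xs j)).
Proof.
move=> d2 [srt rng] [P [PN Hs]].
have [N0|Npos] := posnP (size s).
  move/size0nil: N0 => ->; exists [::]; split=> //; split=> // y.
  by split=> // -[].
set N := size s in PN Hs Npos.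
have N2 : (1 < N)%N.
  by move: PN Npos; case: (N) => [|[|n]] //; rewrite modn1.
pose t i := nth 0 s i.
have ht : forall i, (i < N)%N -> 0 <= t i /\ t i < 1.
  move=> i iN; move/all_nthP: rng => /(_ 0 i iN) /andP[]; by split.
have hlt : forall i j, (i < N)%N -> (j < N)%N -> (i < j)%N -> t i < t j.
  by move=> i j iN jN ij; rewrite /t lt_sorted_ltn_nth.
pose nx i := ((i + P) %% N)%N.
pose cc i := (i.+1 %% N)%N.
pose ell i := t (cc i) - t i + (i.+1 == N)%:R.
pose kk i := d%:R * ell i - ell (nx i).
have hsig : forall i, (i < N)%N -> t (nx i) = d%:R * t i - (Num.floor (d%:R * t i))%:~R.
  by move=> i iN; rewrite /t /nx -Hs.
have ellpos : forall i, (i < N)%N -> 0 < ell i.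
  move=> i iN; rewrite /ell /cc; case: (ltnP i.+1 N) => h.
    rewrite modn_small // (ltn_eqF h) addr0 subr_gt0; exact: hlt.
  have e : i.+1 = N by apply/eqP; rewrite eqn_leq h iN.
  rewrite e modnn eqxx mulr1n.
  have := ht 0%N Npos; have := ht i iN; lra.
have ellle : forall i, (i < N)%N -> ell i <= 1.
  move=> i iN; rewrite /ell /cc; case: (ltnP i.+1 N) => h.
    rewrite modn_small // (ltn_eqF h) addr0.
    have := ht _ h; have := ht i iN; lra.
  have e : i.+1 = N by apply/eqP; rewrite eqn_leq h iN.
  rewrite e modnn eqxx mulr1n.
  have : t 0%N < t i by apply: hlt => //; rewrite -ltnS e.
  lra.
have hkint : forall i, (i < N)%N -> exists z : int, kk i = z%:~R.
  move=> i iN.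
  have ciN : (cc i < N)%N by rewrite ltn_pmod.
  have e3 : nx (cc i) = cc (nx i) by rewrite /nx /cc -(addn1 i) -(addn1 ((i + P) %% N)) !modnDml addnAC.
  exists (Num.floor (d%:R * t (cc i)) - Num.floor (d%:R * t i)
          + (d * (i.+1 == N))%N%:Z - ((nx i).+1 == N)%N%:Z).
  rewrite /kk /ell -e3 (hsig _ ciN) (hsig _ iN) !intrD !intrN -!pmulrn natrM.
  ring.
have hkge : forall i, (i < N)%N -> 0 <= kk i /\ (0 < kk i -> 1 <= kk i).
  move=> i iN; have [z ez] := hkint i iN.
  have : -1 < kk i.
    have nxN : (nx i < N)%N by rewrite ltn_pmod.
    have := ellle _ nxN; have := ellpos _ iN.
    have : (2%:R <= d%:R :> R) by rewrite ler_nat.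
    rewrite /kk; nra.
  rewrite ez -(@intrN R 1) ltr_int ler0z ltr0z ler1z => hz.
  split; first by lia.
  by move=> h; lia.
have hsum_ell : \sum_(0 <= i < N) ell i = 1.
  rewrite /ell big_split sumrB /=.
  have -> : \sum_(0 <= i < N) t (cc i) = \sum_(0 <= i < N) t i.
    rewrite -(shift_sum t N 1 Npos); apply: eq_big_nat => i _.
    by rewrite /cc addn1.
  rewrite subrr add0r.
  case: (N) Npos => [|n] // _.
  rewrite big_nat_recr //= eqxx big1_seq ?add0r // => i /andP[_].
  rewrite mem_index_iota => /andP[_ h].
  by rewrite eqSS (ltn_eqF h).
have hsum_k : \sum_(0 <= i < N) kk i = (d - 1)%:R.
  rewrite /kk sumrB -mulr_sumr.
  rewrite (shift_sum ell N P Npos) hsum_ell mulr1 natrB; last by apply: ltnW.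
  by [].
pose reach a b := has (fun m => b == ((a + m * P) %% N)%N) (iota 0 N).
have reachP : forall a b, reach a b <-> exists n, b = ((a + n * P) %% N)%N.
  move=> a b; split.
    by case/hasP => m _ /eqP ->; exists m.
  case=> n ->; apply/hasP; exists (n %% N)%N.
    by rewrite mem_iota add0n ltn_pmod.
  by rewrite modmul_small.
have reach_sym : forall a b, (a < N)%N -> reach a b -> reach b a.
  move=> a b aN /reachP [n ->]; apply/reachP; exists (N.-1 * n)%N.
  have e : (a + n * P + N.-1 * n * P = n * P * N + a)%N.
    have := prednK Npos; move: (N.-1) => M <-; nia.
  by rewrite modnDml e modnMDl modn_small.
have reach_trans : forall a b c, reach a b -> reach b c -> reach a c.
  move=> a b c /reachP [n1 ->] /reachP [n2 ->]; apply/reachP; exists (n1 + n2)%N.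
  by rewrite modnDml mulnDl addnA.
have hiter : forall n a, (a < N)%N ->
    iter n (sigma d) (t a) = t ((a + n * P) %% N)%N.
  elim=> [|n IH] a aN /=; first by rewrite mul0n addn0 modn_small.
  rewrite IH // /t Hs ?ltn_pmod // modnDml mulSn.
  by congr (nth _ _ (_ %% _)); lia.
have suniq : uniq s by apply: lt_sorted_uniq.
pose pos i := 0 < kk i.
have hcount : (count pos (iota 0 N) <= d - 1)%N.
  rewrite -(ler_nat R) -hsum_k -sum1_count natr_sum.
  rewrite [X in X <= _]big_seq_cond.
  apply: (@le_trans _ _ (\sum_(i <- iota 0 N | (i \in iota 0 N) && pos i) kk i)).
    apply: ler_sum => i /andP[]; rewrite mem_iota add0n => /andP[_ iN].
    by have [_ h] := hkge i iN; move/h.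
  rewrite /index_iota subn0; apply: sum_filter_le => i.
  by rewrite mem_iota add0n => /andP[_ iN]; have [] := hkge i iN.
have hexpos : forall j, (j < N)%N -> exists i, [/\ (i < N)%N, pos i & reach i j].
  move=> j jN.
  pose c m := ((j + m * P) %% N)%N.
  have cN : forall m, (c m < N)%N by move=> m; rewrite ltn_pmod.
  have : has (fun m => pos (c m)) (iota 0 N).
    apply/negPn/negP => /hasPn H.
    have le0 : \sum_(0 <= m < N) kk (c m) <= 0.
      rewrite /index_iota subn0 big_seq; apply: sumr_le0 => m /H.
      by rewrite /pos leNgt.
    pose S := \sum_(0 <= m < N) ell (c m).
    have eqs : \sum_(0 <= m < N) kk (c m) = d%:R * S - S.
      rewrite /kk sumrB -mulr_sumr; congr (_ - _).
      rewrite /S -(@cyc_sum R (fun m => ell (c m)) N); last first.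
        by rewrite /c mul0n addn0 mulnC addnC modnMDl.
      apply: eq_big_nat => m _; rewrite /nx /c modnDml mulSn.
      by congr (ell (_ %% _)%N); lia.
    have Spos : 0 < S.
      rewrite /S; case: (N) Npos => [|n] // _.
      rewrite big_nat_recl //; apply: ltr_wpDr.
        by apply: sumr_ge0 => m _; apply/ltW/ellpos; apply: cN.
      by apply: ellpos; apply: cN.
    have : (2%:R <= d%:R :> R) by rewrite ler_nat.
    move: le0; rewrite eqs; nra.
  case/hasP => m _ hm; exists (c m); split=> //.
  by apply: reach_sym => //; apply/reachP; exists m.
pose sel i := pos i && all (fun j => ~~ (pos j && reach j i)) (iota 0 i).
pose fl := [seq i <- iota 0 N | sel i].
have flN : forall i, i \in fl -> (i < N)%N /\ sel i.
  by move=> i; rewrite mem_filter mem_iota add0n => /andP[-> /andP[_ ->]].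
exists (map t fl); split.
  rewrite size_map size_filter; apply: leq_trans hcount.
  by apply: sub_count => i /andP[].
split.
  move=> y; split.
    move=> ys; pose j := index y s.
    have jN : (j < N)%N by rewrite index_mem.
    have yj : y = t j by rewrite /t /= nth_index.
    have [i [iN pi rij]] := hexpos j jN.
    pose Q := fun i => [&& (i < N)%N, pos i & reach i j].
    have exQ : exists i, Q i by exists i; rewrite /Q iN pi rij.
    case: (ex_minnP exQ) => i0 /and3P[i0N pi0 ri0] mini.
    exists (t i0).
      apply: map_f; rewrite mem_filter mem_iota add0n i0N leq0n /sel pi0 /= andbT.
      apply/allP => j'; rewrite mem_iota add0n => /andP[_ j'i0].
      apply/negP => /andP[pj' rj'].
      have : (i0 <= j')%N.
        apply: mini; rewrite /Q pj' (reach_trans _ _ _ rj' ri0) andbT.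
        by rewrite andbT (ltn_trans j'i0 i0N).
      by rewrite leqNgt j'i0.
    case/reachP: ri0 => n en; exists n; by rewrite hiter // -en yj.
  case=> x /mapP [i ifl ->] [n ->].
  have [iN _] := flN i ifl.
  by rewrite hiter // /t /=; apply: mem_nth; rewrite ltn_pmod.
move=> i j; rewrite size_map => il jl ij [n].
rewrite !(nth_map 0%N) //.
have ufl : uniq fl by rewrite filter_uniq // iota_uniq.
have [aN sa] := flN _ (mem_nth 0%N il).
have [bN sb] := flN _ (mem_nth 0%N jl).
have ab : nth 0%N fl i != nth 0%N fl j by rewrite nth_uniq //; apply/eqP.
move: ab aN sa bN sb.
move: (nth 0%N fl i) (nth 0%N fl j) => a b ab aN sa bN sb.
rewrite hiter // => e.
have eb : b = ((a + n * P) %% N)%N.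
  apply/eqP; rewrite -(nth_uniq 0 bN _ suniq) ?ltn_pmod //; exact/eqP.
have rab : reach a b by apply/reachP; exists n.
have rba := reach_sym a b aN rab.
case: (ltngtP a b) => [lab|lba|eab].
- move: sb => /andP[_ /allP /(_ a)]; rewrite mem_iota add0n lab => /(_ isT).
  by case/andP: sa => pa _; rewrite pa rab.
- move: sa => /andP[_ /allP /(_ b)]; rewrite mem_iota add0n lba => /(_ isT).
  by case/andP: sb => pb _; rewrite pb rba.
- by rewrite eab eqxx in ab.
Qed.
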